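(* Let $H$ be a simple hypergraph with $s=e(H)$ edges and fractional cover number $\rho^*=\rho^*(H)$. If $\rho^*<s$, then there is a constant $c=c(H)$ such that $\mathcal{E}_H(k)\leq c\,k^{(s-1)/(s-\rho^* )}$ for all positive integers $k$.
   Context: A fractional cover of a hypergraph $H$ is a function $\phi:E(H)\to[0,1]$ with $\sum_{e\ni v}\phi(e)\geq 1$ for every $v\in V(H)$; $\rho^*(H)$ is the minimum of $\sum_{e\in E(H)}\phi(e)$ over fractional covers. For hypergraphs $G,H$, $\operatorname{ex}(G,H)$ is the maximum number of edges of a subhypergraph of $G$ containing no copy of $H$, and $\mathcal{E}_H(k):=\sup\{e(G): G\text{ a simple hypergraph with }\operatorname{ex}(G,H)<k\}$. Hypergraphs have no isolated vertices. *)

(* Defs.v *)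
From HB Require Import structures.
From mathcomp Require Import boolp classical_sets reals exp.
From mathcomp Require Import all_boot all_order all_algebra.
Set Implicit Arguments. Unset Strict Implicit. Unset Printing Implicit Defensive.
Import Order.TTheory GRing.Theory Num.Theory.
Local Open Scope ring_scope.

(* A (finite) hypergraph on the vertex type 'I_n is a set of edges, each edge
   a set of vertices.  Being a set of sets, it has no repeated edges
   (simplicity); we require edges to be nonempty.  Its vertex set is taken to
   be the union of its edges ("no isolated vertices"), i.e. [cover G]. *)
Definition hypergraph (n : nat) (G : {set {set 'I_n}}) : bool :=
  set0 \notin G.

Definition has_copy (m n : nat) (H : {set {set 'I_m}}) (F : {set {set 'I_n}})
  : bool :=
  [exists f : {ffun 'I_m -> 'I_n},
     [forall x in cover H, forall y in cover H, (f x == f y) ==> (x == y)]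
     && [forall e in H, (f @: e) \in F]].

Definition ex (n m : nat) (G : {set {set 'I_n}}) (H : {set {set 'I_m}}) : nat :=
  \max_(F : {set {set 'I_n}} | (F \subset G) && ~~ has_copy H F) #|F|.

Definition frac_cover (R : realType) (m : nat) (H : {set {set 'I_m}})
  (phi : {set 'I_m} -> R) : Prop :=
  (forall e, e \in H -> 0 <= phi e <= 1) /\
  (forall v, v \in cover H -> 1 <= \sum_(e in H | v \in e) phi e).

Definition rho_star (R : realType) (m : nat) (H : {set {set 'I_m}}) : R :=
  inf [set w : R | exists phi : {set 'I_m} -> R,
                     frac_cover H phi /\ w = \sum_(e in H) phi e]%classic.

(* Main.v *)
Require Import Defs.
From HB Require Import structures.
From mathcomp Require Import boolp classical_sets reals exp.
From mathcomp Require Import all_boot all_order all_algebra.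
From mathcomp Require Import sequences.
From mathcomp Require Import ring lra zify.
Import Order.TTheory GRing.Theory Num.Theory.
Set Implicit Arguments. Unset Strict Implicit. Unset Printing Implicit Defensive.

Lemma aux6 a b P Q U L : (a * L <= b * Q)%N -> (P * Q <= U * L)%N -> (0 < Q)%N ->
  (a * P <= b * U)%N.
Proof.
move=> h1 h2 Q0; rewrite -(leq_pmul2r Q0).
apply: (@leq_trans (a * (U * L))); first by rewrite -mulnA leq_mul2l h2 orbT.
rewrite mulnCA (mulnC b U) -mulnA leq_mul2l h1 orbT //.
Qed.

Lemma binom_ineq s : forall l t, (s <= t)%N -> (t <= l)%N ->
  ('C(l - s, t - s) * l ^ s <= 'C(l, t) * t ^ s)%N.
Proof.
elim: s => [|s IH] l t st tl; first by rewrite !subn0 !expn0.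
case: t st tl => [//|t] st tl.
case: l tl => [//|l] tl.
rewrite !subSS.
have IH' := IH l t st tl.
have e1 : ('C(l.+1, t.+1) * t.+1 = l.+1 * 'C(l, t))%N.
  by rewrite mulnC -mul_bin_diag.
have key : ('C(l - s, t - s) * l.+1 ^ s <= 'C(l, t) * t.+1 ^ s)%N.
  case: s IH IH' st => [|s] _ IH' st; first by rewrite !expn0 !subn0.
  have t0 : (0 < t)%N by lia.
  have hx : (l.+1 ^ s.+1 * t ^ s.+1 <= t.+1 ^ s.+1 * l ^ s.+1)%N.
    by rewrite -!expnMn leq_exp2r //; nia.
  have tp : (0 < t ^ s.+1)%N by rewrite expn_gt0 t0.
  exact: aux6 IH' hx tp.
rewrite !expnS.
have -> : ('C(l.+1, t.+1) * (t.+1 * t.+1 ^ s) = l.+1 * ('C(l, t) * t.+1 ^ s))%N.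
  by rewrite mulnA e1 mulnA.
by rewrite mulnCA leq_mul2l key orbT.
Qed.

Lemma supersets (T : finType) (G S : {set T}) t :
  S \subset G -> (t <= #|G|)%N ->
  (#|[set T' : {set T} | [&& T' \subset G, #|T'| == t & S \subset T']]| * #|G| ^ #|S|
     <= 'C(#|G|, t) * t ^ #|S|)%N.
Proof.
move=> SG tG.
case: (ltnP t #|S|) => [ts|st].
  have -> : [set T' : {set T} | [&& T' \subset G, #|T'| == t & S \subset T']] = set0.
    apply/setP => T'; rewrite !inE; apply/negP => /and3P[_ /eqP Tt ST].
    by have := subset_leq_card ST; rewrite Tt; lia.
  by rewrite cards0.
apply: leq_trans (binom_ineq st tG); rewrite leq_mul2r; apply/orP; right.
have cGS : #|G :\: S| = (#|G| - #|S|)%N by rewrite cardsD (setIidPr SG).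
rewrite -cGS -cards_draws.
set A := [set T' : {set T} | _].
have inj : {in A &, injective (fun T' => T' :\: S)}.
  move=> T1 T2; rewrite !inE => /and3P[_ _ S1] /and3P[_ _ S2] e.
  apply/setP => x; case: (boolP (x \in S)) => xS.
    by rewrite (subsetP S1 x xS) (subsetP S2 x xS).
  by have := congr1 (fun B : {set T} => x \in B) e; rewrite /= !inE xS !andTb.
rewrite -(card_in_imset inj); apply: subset_leq_card.
apply/subsetP => U /imsetP[T' HT' ->]; move: HT'; rewrite !inE => /and3P[TG /eqP Tt ST].
by rewrite setSD //= cardsD (setIidPr ST) Tt.
Qed.

Lemma deletion (T : finType) (y0 : T) (G : {set T}) (C : {set {set T}}) s t :
  (0 < s)%N -> (forall S, S \in C -> (S \subset G) && (#|S| == s)) -> (t <= #|G|)%N ->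
  exists F : {set T}, [/\ F \subset G, (forall S, S \in C -> ~~ (S \subset F)) &
     exists c, (t <= #|F| + c)%N /\ (c * #|G| ^ s <= #|C| * t ^ s)%N].
Proof.
move=> s0 CG tG.
set Tt := [set T' : {set T} | T' \subset G & #|T'| == t].
have cTt : #|Tt| = 'C(#|G|, t) by rewrite cards_draws.
set cnt := fun T' : {set T} => #|[set S in C | S \subset T']|.
have dbl0 : (\sum_(T' in Tt) cnt T' = \sum_(S in C) #|[set T' in Tt | S \subset T']|)%N.
  rewrite /cnt.
  under eq_bigr do rewrite -sum1_card.
  under [in RHS]eq_bigr do rewrite -sum1_card.
  rewrite (exchange_big_dep (fun S => S \in C)) /=; last by move=> i j _; rewrite inE => /andP[].
  apply: eq_bigr => S SC; apply: eq_bigl => T'; rewrite !inE.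
  by rewrite SC.
have dbl : (\sum_(T' in Tt) cnt T' * #|G| ^ s <= #|C| * ('C(#|G|, t) * t ^ s))%N.
  rewrite -big_distrl /= dbl0 big_distrl /= -sum_nat_const.
  apply: leq_sum => S SC; move: (CG S SC) => /andP[SG /eqP <-].
  apply: leq_trans (supersets SG tG); rewrite leq_mul2r; apply/orP; right.
  by apply: subset_leq_card; apply/subsetP => T'; rewrite !inE andbA.
have [T' T'in cntT'] : exists2 T', T' \in Tt & (cnt T' * #|G| ^ s <= #|C| * t ^ s)%N.
  case: (boolP [exists T', (T' \in Tt) && (cnt T' * #|G| ^ s <= #|C| * t ^ s)%N]).
    by case/existsP => T' /andP[h1 h2]; exists T'.
  rewrite negb_exists => /forallP hall.
  have h : (\sum_(T' in Tt) (#|C| * t ^ s).+1 <= \sum_(T' in Tt) cnt T' * #|G| ^ s)%N.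
    apply: leq_sum => T' HT'; move: (hall T'); rewrite HT' /= ltnNge; exact: idP.
  have := leq_trans h dbl; rewrite sum_nat_const cTt mulnCA leq_pmul2l ?ltnn //.
  by rewrite bin_gt0.
move: T'in; rewrite inE => /andP[TG /eqP Tt'].
set Rm := (fun S : {set T} => odflt y0 [pick y in S]) @: [set S in C | S \subset T'].
exists (T' :\: Rm); split.
- exact: subset_trans (subsetDl _ _) TG.
- move=> S SC; apply/negP => SF.
  have ST : S \subset T' := subset_trans SF (subsetDl _ _).
  have [y Sy ey] : exists2 y, y \in S & odflt y0 [pick y in S] = y.
    case: pickP => [y' Sy'|none]; first by exists y'.
    move: (CG S SC) => /andP[_ /eqP cS].
    by have := eq_card0 none; rewrite cS => sz; move: s0; rewrite sz.
  have yR : y \in Rm by apply/imsetP; exists S; rewrite ?inE ?SC ?ST // ey.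
  by move: (subsetP SF y Sy); rewrite inE yR.
- exists (cnt T'); split => //.
  have h1 : (#|Rm| <= cnt T')%N by apply: leq_imset_card.
  have h2 : (#|T' :&: Rm| <= #|Rm|)%N by apply: subset_leq_card; apply: subsetIr.
  rewrite cardsD Tt'; lia.
Qed.

Local Open Scope ring_scope.

Section Holder.
Variable R : realType.

Lemma amgm (I : finType) (P : pred I) (q x : I -> R) :
  (forall i, P i -> 0 < q i) -> (forall i, P i -> 0 <= x i) ->
  \sum_(i | P i) q i = 1 ->
  \prod_(i | P i) x i `^ q i <= \sum_(i | P i) q i * x i.
Proof.
move=> q0 x0 qs.
case: (boolP [exists i, P i && (x i == 0)]).
  case/existsP=> i /andP[Pi /eqP xi0].
  rewrite (bigD1 i Pi) /= xi0 powR0; last by rewrite gt_eqF ?q0.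
  rewrite mul0r.
  by apply: sumr_ge0 => j Pj; apply: mulr_ge0; [apply: ltW; apply: q0 | apply: x0].
rewrite negb_exists => /forallP xn0.
have xp : forall i, P i -> 0 < x i.
  by move=> i Pi; rewrite lt_def x0 // andbT; move: (xn0 i); rewrite Pi.
set G := \sum_(i | P i) q i * ln (x i).
have -> : \prod_(i | P i) x i `^ q i = expR G.
  rewrite /G expR_sum; apply: eq_bigr => i Pi.
  by rewrite /powR gt_eqF ?xp.
have step : forall i, P i -> q i * (expR G * (1 + (ln (x i) - G))) <= q i * x i.
  move=> i Pi; rewrite ler_pM2l ?q0 //.
  have e : x i = expR G * expR (ln (x i) - G).
    by rewrite -expRD addrC subrK lnK // posrE xp.
  rewrite [X in _ <= X]e ler_pM2l ?expR_gt0 //; exact: expR_ge1Dx.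
have key : expR G = \sum_(i | P i) q i * (expR G * (1 + (ln (x i) - G))).
  rewrite (eq_bigr (fun i => expR G * q i + (expR G * (q i * ln (x i)) - (expR G * G) * q i))); last by move=> i _; ring.
  rewrite big_split sumrB /= -!mulr_sumr qs -/G.
  by rewrite !mulr1 subrr addr0.
rewrite key; exact: ler_sum.
Qed.


Lemma holder (I J : finType) (P : pred I) (p : I -> R) (a : I -> J -> R) :
  (forall i, P i -> 0 < p i) -> (forall i j, P i -> 0 <= a i j) ->
  1 <= \sum_(i | P i) p i ->
  \sum_j \prod_(i | P i) a i j `^ p i <= \prod_(i | P i) (\sum_j a i j) `^ p i.
Proof.
move=> p0 a0 p1.
set S := fun i => \sum_j a i j.
have S0 : forall i, P i -> 0 <= S i by move=> i Pi; apply: sumr_ge0 => j _; apply: a0.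
case: (boolP [exists i, P i && (S i == 0)]).
  case/existsP=> i /andP[Pi /eqP Si0].
  have aij0 : forall j, a i j = 0.
    move=> j; move/eqP: Si0; rewrite /S psumr_eq0; last by move=> k _; apply: a0.
    by move/allP/(_ j (mem_index_enum j))/eqP.
  rewrite big1; first by apply: prodr_ge0 => k _; apply: powR_ge0.
  move=> j _; rewrite (bigD1 i Pi) /= aij0 powR0 ?mul0r //.
  by rewrite gt_eqF ?p0.
rewrite negb_exists => /forallP Sn0.
have Sp : forall i, P i -> 0 < S i.
  by move=> i Pi; rewrite lt_def S0 // andbT; move: (Sn0 i); rewrite Pi.
set Pt := \sum_(i | P i) p i.
have Pt0 : 0 < Pt by apply: lt_le_trans p1.
set q := fun i => p i / Pt.
set x := fun i j => a i j / S i.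
have eqa : forall i j, P i -> a i j = S i * x i j.
  by move=> i j Pi; rewrite /x mulrCA divff ?mulr1 // gt_eqF ?Sp.
have x0 : forall i j, P i -> 0 <= x i j.
  by move=> i j Pi; rewrite /x divr_ge0 ?a0 ?S0.
have x1 : forall i j, P i -> x i j <= 1.
  move=> i j Pi; rewrite /x ler_pdivrMr ?Sp // mul1r /S.
  rewrite (bigD1 j) //= lerDl; apply: sumr_ge0 => k _; exact: a0.
have q0 : forall i, P i -> 0 < q i by move=> i Pi; rewrite /q divr_gt0 ?p0.
have qp : forall i, P i -> q i <= p i.
  move=> i Pi; rewrite /q ler_pdivrMr // ler_peMr // ltW ?p0 //.
have qs : \sum_(i | P i) q i = 1.
  by rewrite /q -mulr_suml divff // gt_eqF.
have term : forall j, \prod_(i | P i) a i j `^ p i =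
    \prod_(i | P i) (S i) `^ p i * \prod_(i | P i) (x i j) `^ p i.
  move=> j; rewrite -big_split /=; apply: eq_bigr => i Pi.
  by rewrite eqa // powRM ?S0 ?x0.
have bnd : forall j, \prod_(i | P i) (x i j) `^ p i <= \sum_(i | P i) q i * x i j.
  move=> j; apply: le_trans (amgm q0 (fun i Pi => x0 i j Pi) qs).
  apply: ler_prod => i Pi; rewrite powR_ge0 /=.
  have [->|xn0] := eqVneq (x i j) 0.
    by rewrite !powR0 ?gt_eqF ?q0 ?p0.
  apply: ger_powR; last exact: qp.
  by rewrite lt_def xn0 x0 // x1.
rewrite (eq_bigr _ (fun j _ => term j)).
rewrite -mulr_sumr ler_piMr //; first by apply: prodr_ge0 => i _; apply: powR_ge0.
apply: le_trans (ler_sum _ (fun j _ => bnd j)) _.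
rewrite exchange_big /=.
rewrite (eq_bigr q); first by rewrite qs.
move=> i Pi; rewrite -mulr_sumr /x -mulr_suml divff ?mulr1 //.
by rewrite gt_eqF ?Sp.
Qed.

End Holder.

Section FK.
Variable R : realType.
Variables m n : nat.
Local Notation X := {ffun 'I_m -> 'I_n}.

Definition agree_out (D : {set 'I_m}) (z x : X) : bool :=
  [forall u, (u \notin D) ==> (x u == z u)].
Definition SD (D : {set 'I_m}) (z : X) (F : X -> R) : R :=
  \sum_(x | agree_out D z x) F x.
Definition upd (z : X) (v : 'I_m) (c : 'I_n) : X :=
  [ffun u => if u == v then c else z u].

Lemma SD0 (z : X) (F : X -> R) : SD set0 z F = F z.
Proof.
rewrite /SD (big_pred1 z) // => x /=.
apply/forallP/eqP => [h|->]; last by move=> u; rewrite eqxx implybT.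
by apply/ffunP => u; move: (h u); rewrite in_set0 /= => /eqP.
Qed.

Lemma agree_upd (D : {set 'I_m}) (z : X) v c (x : X) : v \notin D ->
  agree_out D (upd z v c) x = agree_out (v |: D) z x && (x v == c).
Proof.
move=> vD; apply/forallP/andP => [h|[/forallP h1 /eqP h2] u].
  split.
    apply/forallP => u; apply/implyP; rewrite in_setU1 negb_or => /andP[uv uD].
    by move: (h u); rewrite uD /= ffunE (negbTE uv).
  by move: (h v); rewrite vD /= ffunE eqxx.
apply/implyP => uD; rewrite ffunE; case: (eqVneq u v) => [->|uv]; first by rewrite h2.
by move: (h1 u); rewrite in_setU1 negb_or uv uD.
Qed.

Lemma SD_split (D : {set 'I_m}) (z : X) v (F : X -> R) : v \notin D ->
  SD (v |: D) z F = \sum_c SD D (upd z v c) F.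
Proof.
move=> vD; rewrite /SD.
rewrite (eq_bigr (fun c => \sum_x (if agree_out D (upd z v c) x then F x else 0))); last first.
  by move=> c _; rewrite big_mkcond.
rewrite exchange_big /= big_mkcond /=; apply: eq_bigr => x _.
under eq_bigr do rewrite agree_upd //.
case: (agree_out (v |: D) z x) => /=; last by rewrite big1.
by rewrite -big_mkcond /= (big_pred1 (x v)) // => c; rewrite eq_sym.
Qed.

Lemma SD_upd_inv (E e : {set 'I_m}) (z : X) v c (g : X -> R) :
  v \notin e -> E \subset e ->
  (forall x y : X, (forall u, u \in e -> x u = y u) -> g x = g y) ->
  SD E (upd z v c) g = SD E z g.
Proof.
move=> ve Ee ginv; have vE : v \notin E by apply: contra ve; apply: (subsetP Ee).
rewrite /SD (reindex_onto (fun y => upd y v c) (fun x => upd x v (z v))).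
  apply: eq_big => [y|y /andP[_ _]].
    apply/andP/forallP => [[/forallP h1 /eqP h2] u|h].
      apply/implyP => uE; case: (eqVneq u v) => [->|uv].
        by have := congr1 (fun f : X => f v) h2; rewrite !ffunE eqxx => <-.
      by move: (h1 u); rewrite uE /= !ffunE (negbTE uv).
    split.
      apply/forallP => u; apply/implyP => uE; rewrite !ffunE.
      case: (eqVneq u v) => [_|uv] //; by move: (h u); rewrite uE.
    apply/eqP/ffunP => u; rewrite !ffunE; case: (eqVneq u v) => [->|uv] //.
    by move: (h v); rewrite vE /= => /eqP.
  apply: ginv => u ue; rewrite ffunE; case: (eqVneq u v) => // uv.
  by move: ue; rewrite uv (negbTE ve).
move=> x /forallP h; apply/ffunP => u; rewrite !ffunE.
case: (eqVneq u v) => [->|//]; by move: (h v); rewrite vE /= ffunE eqxx => /eqP ->.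
Qed.


Lemma FK (H : {set {set 'I_m}}) (phi : {set 'I_m} -> R) (w : {set 'I_m} -> X -> R) :
  (forall e, e \in H -> 0 < phi e) ->
  (forall e x, e \in H -> 0 <= w e x) ->
  (forall e (x y : X), e \in H -> (forall u, u \in e -> x u = y u) -> w e x = w e y) ->
  forall (D : {set 'I_m}) (z : X),
  (forall v, v \in D -> 1 <= \sum_(e in H | v \in e) phi e) ->
  SD D z (fun x => \prod_(e in H) w e x) <=
  \prod_(e in H) (SD (D :&: e) z (fun x => w e x `^ (phi e)^-1)) `^ phi e.
Proof.
move=> phi0 w0 winv D; move Dk: #|D| => k; elim: k D Dk => [|k IH] D Dk z cov.
  move/eqP: Dk; rewrite cards_eq0 => /eqP ->; rewrite SD0.
  rewrite le_eqVlt; apply/orP; left; apply/eqP.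
  apply: eq_bigr => e eH; rewrite set0I SD0 -powRrM mulVf ?powRr1 ?w0 //.
  by rewrite gt_eqF ?phi0.
have [v vD] : exists v, v \in D.
  by apply/set0Pn; rewrite -card_gt0 Dk.
set D' := D :\ v.
have vD' : v \notin D' by rewrite /D' setD11.
have DD : D = v |: D' by rewrite /D' setD1K.
have D'k : #|D'| = k by move: Dk; rewrite DD cardsU1 vD' add1n => -[].
have cov' : forall u, u \in D' -> 1 <= \sum_(e in H | u \in e) phi e.
  by move=> u uD'; apply: cov; rewrite DD in_setU1 uD' orbT.
set g := fun e x => w e x `^ (phi e)^-1.
have g0 : forall e x, 0 <= g e x by move=> e x; apply: powR_ge0.
have ginv : forall e, e \in H -> forall x y : X, (forall u, u \in e -> x u = y u) -> g e x = g e y.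
  by move=> e eH x y hxy; rewrite /g (winv e x y eH hxy).
rewrite [in X in X <= _]DD SD_split //.
have step1 : forall c, SD D' (upd z v c) (fun x => \prod_(e in H) w e x) <=
   \prod_(e in H | v \in e) (SD (D' :&: e) (upd z v c) (g e)) `^ phi e *
   \prod_(e in H | v \notin e) (SD (D :&: e) z (g e)) `^ phi e.
  move=> c; have h := IH D' D'k (upd z v c) cov'.
  rewrite [X in _ <= X](bigID (fun e : {set 'I_m} => v \in e)) /= in h; apply: le_trans h _; apply: ler_pM.
  - by apply: prodr_ge0 => e _; apply: powR_ge0.
  - by apply: prodr_ge0 => e _; apply: powR_ge0.
  - by [].
  rewrite le_eqVlt; apply/orP; left; apply/eqP; apply: eq_bigr => e /andP[eH ve].
  have DeE : D :&: e = D' :&: e.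
    apply/setP => u; rewrite DD !in_setI in_setU1.
    by case: (eqVneq u v) => [->|_]; rewrite ?(negbTE ve) ?andbF.
  by rewrite DeE (SD_upd_inv _ _ ve (subsetIr _ _) (ginv e eH)).
have h1 : \sum_c SD D' (upd z v c) (fun x => \prod_(e in H) w e x) <=
   \sum_c (\prod_(e in H | v \in e) (SD (D' :&: e) (upd z v c) (g e)) `^ phi e *
   \prod_(e in H | v \notin e) (SD (D :&: e) z (g e)) `^ phi e).
  by apply: ler_sum => c _; exact: step1.
apply: (le_trans h1); rewrite -mulr_suml.
rewrite [X in _ <= X](bigID (fun e : {set 'I_m} => v \in e)) /=.
apply: ler_pM.
- by apply: sumr_ge0 => c _; apply: prodr_ge0 => e _; apply: powR_ge0.
- by apply: prodr_ge0 => e _; apply: powR_ge0.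
- have h2 := holder (P := fun e => (e \in H) && (v \in e)) (p := phi)
    (a := fun e c => SD (D' :&: e) (upd z v c) (g e))
    (fun e Pe => phi0 e (andP Pe).1)
    (fun e c _ => sumr_ge0 _ (fun x _ => g0 e x)) (cov v vD).
  apply: le_trans h2 _.
  rewrite le_eqVlt; apply/orP; left; apply/eqP; apply: eq_bigr => e /andP[eH ve].
  have DeE : D :&: e = v |: (D' :&: e).
    apply/setP => u; rewrite DD !in_setI !in_setU1 in_setI.
    by case: (eqVneq u v) => [->|_] //=; rewrite ve.
  rewrite DeE SD_split //.
  by rewrite in_setI (negbTE vD').
- exact: lexx.
Qed.


End FK.

Section Count.
Variables m n : nat.
Variable H : {set {set 'I_m}}.
Variable G : {set {set 'I_n}}.
Local Notation X := {ffun 'I_m -> 'I_n}.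

Definition wcond (e : {set 'I_m}) (x : X) : bool :=
  (x @: e \in G) && (#|x @: e| == #|e|).

Lemma count_edge (e : {set 'I_m}) (z0 : X) :
  (#|[set x : X | agree_out e z0 x && wcond e x]| <= #|G| * (m.+1) ^ m)%N.
Proof.
set A := [set x : X | _].
pose f := fun x : X => (x @: e,
   [ffun u : 'I_m => (inord (index (x u) (enum (x @: e))) : 'I_m.+1)]).
have inj : {in A &, injective f}.
  move=> x y; rewrite !inE => /andP[/forallP ax /andP[_ /eqP cx]]
    /andP[/forallP ay /andP[_ /eqP cy]] [exy efy].
  apply/ffunP => u; case: (boolP (u \in e)) => ue; last first.
    by move: (ax u) (ay u); rewrite ue /= => /eqP -> /eqP ->.
  have xg : x u \in enum (x @: e) by rewrite mem_enum; apply: imset_f.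
  have yg : y u \in enum (x @: e) by rewrite exy mem_enum; apply: imset_f.
  have sz : (size (enum (x @: e)) <= m)%N.
    by rewrite -cardE cx; apply: (leq_trans (max_card _)); rewrite card_ord.
  have ix : (index (x u) (enum (x @: e)) < m.+1)%N.
    by rewrite ltnS (leq_trans _ sz) // ltnW // index_mem.
  have iy : (index (y u) (enum (x @: e)) < m.+1)%N.
    by rewrite ltnS (leq_trans _ sz) // ltnW // index_mem.
  have := congr1 (fun g : {ffun 'I_m -> 'I_m.+1} => nat_of_ord (g u)) efy.
  rewrite /= !ffunE -exy (inordK ix) (inordK iy) => ei.
  by rewrite -(nth_index (x u) xg) ei nth_index.
rewrite -(card_in_imset inj).
apply: (@leq_trans #|setX G [set: {ffun 'I_m -> 'I_m.+1}]|).
  apply: subset_leq_card; apply/subsetP => p /imsetP[x]; rewrite inE => /andP[_ /andP[xG _]] ->.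
  by rewrite inE /= xG inE.
by rewrite cardsX cardsT card_ffun !card_ord.
Qed.


Definition Kset (z0 : X) := [set x : X | agree_out (cover H) z0 x && [forall e, (e \in H) ==> wcond e x]].

Definition injV (x : X) : bool :=
  [forall u, forall u', [&& u \in cover H, u' \in cover H & x u == x u'] ==> (u == u')].
Definition Xinj (z0 : X) := [set x : X |
  [&& agree_out (cover H) z0 x, injV x & [forall e, (e \in H) ==> (x @: e \in G)]]].
Definition Copies (z0 : X) : {set {set {set 'I_n}}} :=
  [set [set (x : X) @: (e : {set 'I_m}) | e in H] | x in Xinj z0].

Lemma injVP (x : X) u u' : injV x -> u \in cover H -> u' \in cover H -> x u = x u' -> u = u'.
Proof.
by move=> /forallP/(_ u)/forallP/(_ u') h uc uc' e; apply/eqP; move: h; rewrite uc uc' e eqxx.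
Qed.

Lemma injV_img (x : X) e e' : injV x -> e \in H -> e' \in H -> x @: e = x @: e' -> e = e'.
Proof.
move=> ix eH eH' exe.
have sub : forall a b, a \in H -> b \in H -> x @: a = x @: b -> a \subset b.
  move=> a b aH bH eab; apply/subsetP => u ua.
  have : x u \in x @: b by rewrite -eab; apply: imset_f.
  case/imsetP => u' ub' xe.
  have -> : u = u' by apply: (injVP ix) => //; apply/bigcupP; [exists a | exists b].
  exact: ub'.
by apply/eqP; rewrite eqEsubset (sub _ _ eH eH' exe) (sub _ _ eH' eH (esym exe)).
Qed.

Lemma injV_card (x : X) e : injV x -> e \in H -> #|x @: e| = #|e|.
Proof.
move=> ix eH; apply: card_in_imset => u u' ue ue'; apply: (injVP ix);
  by apply/bigcupP; exists e.
Qed.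

Lemma Xinj_Kset z0 : Xinj z0 \subset Kset z0.
Proof.
apply/subsetP => x; rewrite !inE => /and3P[ax ix /forallP hx]; rewrite ax /=.
apply/forallP => e; apply/implyP => eH; rewrite /wcond.
by move: (hx e); rewrite eH /= => ->; rewrite injV_card ?eqxx.
Qed.

Lemma card_Copies z0 : (#|Copies z0| <= #|Kset z0|)%N.
Proof. exact: leq_trans (leq_imset_card _ _) (subset_leq_card (Xinj_Kset z0)). Qed.

Lemma Copies_prop z0 S : S \in Copies z0 -> (S \subset G) && (#|S| == #|H|).
Proof.
case/imsetP => x; rewrite inE => /and3P[_ ix /forallP hx] ->; apply/andP; split.
  apply/subsetP => g /imsetP[e eH ->]; by move: (hx e); rewrite eH.
rewrite card_in_imset //; move=> e e' eH eH'; exact: injV_img.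
Qed.

Lemma copy_in z0 (F : {set {set 'I_n}}) : F \subset G -> has_copy H F ->
  exists2 S, S \in Copies z0 & S \subset F.
Proof.
move=> FG /existsP[f /andP[/forallP finj /forallP fF]].
pose x : X := [ffun u => if u \in cover H then f u else z0 u].
have xe : forall e, e \in H -> x @: e = f @: e.
  move=> e eH; apply: eq_in_imset => u ue; rewrite ffunE.
  by have -> : u \in cover H by apply/bigcupP; exists e.
exists [set x @: (e : {set 'I_m}) | e in H]; last first.
  apply/subsetP => g /imsetP[e eH ->]; rewrite xe //; by move: (fF e); rewrite eH.
apply/imsetP; exists x => //; rewrite inE; apply/and3P; split.
- apply/forallP => u; apply/implyP => uc; by rewrite ffunE (negbTE uc).
- apply/forallP => u; apply/forallP => u'; apply/implyP => /and3P[uc uc'].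
  rewrite !ffunE uc uc' => e; move: (finj u); rewrite uc /= => /forallP/(_ u').
  by rewrite uc' e.
- apply/forallP => e; apply/implyP => eH; rewrite xe //.
  by apply: (subsetP FG); move: (fF e); rewrite eH.
Qed.

Variable R : realType.

Lemma prod_nat_bool (I : finType) (A : pred I) (b : I -> bool) :
  \prod_(i | A i) ((b i)%:R : R) = ([forall i, A i ==> b i])%:R.
Proof.
case: (boolP [forall i, A i ==> b i]) => [/forallP h|].
  by apply: big1 => i Ai; move: (h i); rewrite Ai /= => ->.
rewrite negb_forall => /existsP[i]; rewrite negb_imply => /andP[Ai nb].
by rewrite (bigD1 i Ai) /= (negbTE nb) mul0r.
Qed.

Lemma sum_bool_card (I : finType) (P b : pred I) :
  \sum_(i | P i) ((b i)%:R : R) = (#|[set i | P i && b i]|)%:R.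
Proof.
rewrite -sum1_card natr_sum big_mkcond [in RHS]big_mkcond /=.
by apply: eq_bigr => i _; rewrite inE; case: (P i); case: (b i).
Qed.

Lemma prod_powR (I : finType) (A : pred I) (a : R) (p : I -> R) : 0 < a ->
  \prod_(i | A i) a `^ p i = a `^ (\sum_(i | A i) p i).
Proof.
move=> a0; rewrite /powR gt_eqF // mulr_suml expR_sum.
by apply: eq_bigr.
Qed.


Lemma count_bound (phi : {set 'I_m} -> R) (z0 : X) :
  (0 < #|G|)%N ->
  (forall e, e \in H -> 0 < phi e) ->
  (forall v, v \in cover H -> 1 <= \sum_(e in H | v \in e) phi e) ->
  (#|Kset z0|)%:R <= ((#|G| * (m.+1) ^ m)%N%:R : R) `^ (\sum_(e in H) phi e).
Proof.
move=> G0 phi0 cov.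
have w0 : forall e (x : X), e \in H -> 0 <= ((wcond e x)%:R : R) by move=> *; apply: ler0n.
have winv : forall e (x y : X), e \in H -> (forall u, u \in e -> x u = y u) ->
    ((wcond e x)%:R : R) = (wcond e y)%:R.
  by move=> e x y _ hxy; rewrite /wcond (eq_in_imset hxy).
have := FK phi0 w0 winv z0 cov.
rewrite /SD /=.
under eq_bigr do rewrite prod_nat_bool.
rewrite sum_bool_card => h; apply: (le_trans h).
rewrite -prod_powR; last by rewrite ltr0n muln_gt0 G0 expn_gt0.
apply: ler_prod => e eH; rewrite powR_ge0 /=.
apply: (ge0_ler_powR (ltW (phi0 e eH))); rewrite ?nnegrE ?ler0n //.
  by apply: sumr_ge0 => x _; apply: powR_ge0.
have -> : cover H :&: e = e by apply/setIidPr; apply: bigcup_sup.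
have ee : forall b : bool, ((b%:R : R) `^ (phi e)^-1) = b%:R.
  case; first by rewrite powR1.
  by rewrite powR0 // invr_eq0 gt_eqF ?phi0.
under eq_bigr do rewrite ee.
by rewrite sum_bool_card ler_nat count_edge.
Qed.

End Count.

Section Analysis.
Variable R : realType.

Lemma powRK (a p : R) : 0 <= a -> p != 0 -> (a `^ p) `^ p^-1 = a.
Proof. by move=> a0 p0; rewrite -powRrM mulfV // powRr1. Qed.

Lemma powRKV (a p : R) : 0 <= a -> p != 0 -> (a `^ p^-1) `^ p = a.
Proof. by move=> a0 p0; rewrite -powRrM mulVf // powRr1. Qed.

Lemma powR_limit (b y r : R) : 1 <= b ->
  (forall eps, 0 < eps -> y <= b `^ (r + eps)) -> y <= b `^ r.
Proof.
move=> b1 h; have b0 : 0 < b by apply: (lt_le_trans ltr01 b1).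
have br0 : 0 < b `^ r by apply: powR_gt0.
rewrite leNgt; apply/negP => ybr.
have [b1e|bn1] := eqVneq b 1.
  rewrite b1e in ybr h.
  by move: (h 1 ltr01); rewrite powR1; move: ybr; rewrite powR1 => /lt_geF ->.
have b1' : 1 < b by rewrite lt_neqAle eq_sym bn1 b1.
set t := y / b `^ r.
have t1 : 1 < t by rewrite /t ltr_pdivlMr // mul1r.
have lnb : 0 < ln b by apply: ln_gt0.
have lnt : 0 < ln t by apply: ln_gt0.
set eps := ln t / ln b / 2.
have e0 : 0 < eps by rewrite /eps !divr_gt0.
have := h eps e0; rewrite powRD; last by rewrite (gt_eqF b0) implybT.
have -> : b `^ eps = expR (ln t / 2).
  rewrite /powR gt_eqF // /eps; congr expR.
  by field; rewrite gt_eqF.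
have : expR (ln t / 2) < t.
  rewrite -[X in _ < X]lnK ?posrE ?(lt_trans ltr01 t1) // ltr_expR.
  lra.
move=> et; rewrite leNgt => /negP; apply.
have -> : y = b `^ r * t by rewrite /t mulrCA divff ?mulr1 // gt_eqF.
by rewrite ltr_pM2l.
Qed.


Lemma analysis_core (l k s K : nat) (r Mr : R) :
  (2 <= s)%N -> 1 <= r -> r < s%:R -> 1 <= Mr -> (0 < l)%N -> (0 < k)%N ->
  K%:R <= l%:R `^ r * Mr ->
  (forall t, (t <= l)%N -> exists c : nat, (t <= (k - 1) + c)%N /\ (c * l ^ s <= K * t ^ s)%N) ->
  l%:R <= (2 * Mr) `^ (s%:R - r)^-1 * 2 `^ ((s%:R - 1) / (s%:R - r)) *
          k%:R `^ ((s%:R - 1) / (s%:R - r)).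
Proof.
move=> s2 r1 rs M1 l0 k0 KB hdel.
have es1 : s%:R - 1 = (s - 1)%N%:R :> R by rewrite natrB // (leq_trans _ s2).
rewrite es1.
set L := (l%:R : R). set sr := s%:R - r. set s1 := ((s - 1)%N%:R : R). set A := 2 * Mr.
have L1 : 1 <= L by rewrite /L ler1n.
have L0 : 0 < L by apply: (lt_le_trans ltr01 L1).
have sr0 : 0 < sr by rewrite /sr subr_gt0.
have s10 : 0 < s1 by rewrite /s1 ltr0n; lia.
have s1r : s1 = s%:R - 1 by rewrite es1.
have A0 : 0 < A by rewrite /A; lra.
set x := (L `^ sr / A) `^ s1^-1.
have x0 : 0 <= x by apply: powR_ge0.
have Lsr0 : 0 <= L `^ sr / A by rewrite divr_ge0 ?powR_ge0 ?ltW.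
have xs1 : x `^ s1 = L `^ sr / A by rewrite powRKV // gt_eqF.
have xL : x <= L.
  rewrite /x -[X in _ <= X](powRK (ltW L0) (negbT (gt_eqF s10))).
  apply: ge0_ler_powR; rewrite ?nnegrE ?powR_ge0 //.
    by rewrite invr_ge0 ltW.
  apply: (@le_trans _ _ (L `^ sr)).
    rewrite ler_pdivrMr // ler_peMr ?powR_ge0 //; rewrite /A; lra.
  by apply: ler_powR => //; rewrite s1r /sr; lra.
set t := Num.truncn x.
have [tx1 tx2] := andP (truncn_itv x0).
have tl : (t <= l)%N by rewrite -(ler_nat R); apply: le_trans tx1 xL.
have [c [h1 h2]] := hdel t tl.
have h2R : c%:R * L ^+ s <= K%:R * t%:R ^+ s by rewrite /L -!natrX -!natrM ler_nat.
have ts : (t%:R : R) ^+ s = t%:R * t%:R ^+ (s - 1).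
  by rewrite -exprS subn1 prednK // (ltnW s2).
have ts1 : (t%:R : R) ^+ (s - 1) <= L `^ sr / A.
  rewrite -xs1 /s1 powR_mulrn //; apply: lerXn2r; rewrite ?nnegrE ?ler0n //.
have LrLsr : L `^ r * L `^ sr = L ^+ s.
  by rewrite -powRD ?(gt_eqF L0) ?implybT // /sr addrC subrK powR_mulrn ?ltW.
have Ls0 : 0 < L ^+ s by rewrite exprn_gt0.
have t0 : 0 <= (t%:R : R) by rewrite ler0n.
have cle : c%:R * L ^+ s <= (t%:R / 2) * L ^+ s.
  apply: (le_trans h2R).
  apply: (@le_trans _ _ (L `^ r * Mr * (t%:R * (L `^ sr / A)))).
    rewrite ts; apply: ler_pM.
    - exact: ler0n.
    - by rewrite mulr_ge0 ?exprn_ge0.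
    - exact: KB.
    - by apply: ler_wpM2l.
  have Mr0 : Mr != 0 by rewrite gt_eqF //; lra.
  rewrite -LrLsr /A le_eqVlt; apply/orP; left; apply/eqP; field.
  by rewrite Mr0.
have c2 : c%:R <= (t%:R / 2 : R) by rewrite -(ler_pM2r Ls0).
have h1R : (t%:R : R) <= k%:R - 1 + c%:R.
  have -> : (k%:R - 1 : R) = (k - 1)%N%:R by rewrite natrB.
  by rewrite -natrD ler_nat.
have xk : x < 2 * k%:R by move: tx2; rewrite -natr1; lra.
have k0R : 0 <= 2 * (k%:R : R) by rewrite mulr_ge0 ?ler0n.
have h3 : L `^ sr / A < (2 * k%:R) `^ s1.
  rewrite -xs1; apply: gt0_ltr_powR => //; by rewrite nnegrE.
have h4 : L `^ sr < A * (2 * k%:R) `^ s1 by rewrite mulrC -ltr_pdivrMr.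
have h5 : L < (A * (2 * k%:R) `^ s1) `^ sr^-1.
  rewrite -[X in X < _](powRK (ltW L0) (negbT (gt_eqF sr0))).
  apply: gt0_ltr_powR; rewrite ?invr_gt0 ?nnegrE ?powR_ge0 //.
  by rewrite mulr_ge0 ?powR_ge0 ?ltW.
apply: (le_trans (ltW h5)).
rewrite (powRM _ (ltW A0) (powR_ge0 _ _)) -powRrM (powRM _ (ler0n _ 2) (ler0n _ _)) mulrA. exact: lexx.
Qed.

End Analysis.

Lemma rho_props (R : realType) m (H : {set {set 'I_m}}) :
  hypergraph H -> rho_star R H < #|H|%:R ->
  [/\ (0 < #|H|)%N, 1 <= rho_star R H &
     forall eps : R, 0 < eps -> exists phi, frac_cover H phi /\
        \sum_(e in H) phi e < rho_star R H + eps].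
Proof.
move=> hH hr.
set E := [set w : R | exists phi, frac_cover H phi /\ w = \sum_(e in H) phi e]%classic.
have rE : rho_star R H = inf E by [].
have Ene : (E !=set0)%classic.
  exists (\sum_(e in H) (1:R)); exists (fun _ => 1); split => //; split.
    by move=> e _; rewrite ler01 lexx.
  move=> v /bigcupP[e eH ve]; rewrite (bigD1 e) /=; last by rewrite eH ve.
  by rewrite lerDl; apply: sumr_ge0 => *; apply: ler01.
have lb0 : (lbound E 0)%classic.
  move=> w [phi [[fc1 _] ->]]; apply: sumr_ge0 => e eH.
  by case/andP: (fc1 e eH).
have r0 : 0 <= rho_star R H by rewrite rE; apply: lb_le_inf.
have H0 : (0 < #|H|)%N.
  rewrite lt0n; apply/negP => /eqP h; move: hr; rewrite h.
  by rewrite ltNge r0.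
have [e0 e0H] : exists e0, e0 \in H by apply/set0Pn; rewrite -card_gt0.
have [v ve0] : exists v, v \in e0.
  apply/set0Pn; apply/negP => /eqP e00; move: hH; rewrite /hypergraph -e00 e0H.
  by [].
have vc : v \in cover H by apply/bigcupP; exists e0.
have lb1 : (lbound E 1)%classic.
  move=> w [phi [[fc1 fc2] ->]]; apply: le_trans (fc2 v vc) _.
  rewrite [X in _ <= X](bigID (fun e : {set 'I_m} => v \in e)) /= lerDl.
  by apply: sumr_ge0 => e /andP[eH _]; case/andP: (fc1 e eH).
have r1 : 1 <= rho_star R H by rewrite rE; apply: lb_le_inf.
split => // eps eps0.
have hinf : has_inf E by split => //; exists 0.
have [w [phi [fc ->]] wlt] := inf_adherent eps0 hinf.
by exists phi; rewrite rE.
Qed.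

Unset Implicit Arguments.
Set Strict Implicit.
Theorem proposition2p8 (R : realType) (m : nat) (H : {set {set 'I_m}}) :
  hypergraph H ->
  rho_star R H < (#|H|)%:R ->
  exists c : R, forall k : nat, (0 < k)%N ->
    forall (n : nat) (G : {set {set 'I_n}}), hypergraph G ->
      (ex G H < k)%N ->
      (#|G|)%:R <= c * powR (k%:R)
        (((#|H|)%:R - 1) / ((#|H|)%:R - rho_star R H)).
Proof.
move=> hH hr.
have [H0 r1 approx] := rho_props hH hr.
have s2 : (2 <= #|H|)%N.
  have : (1 : R) < #|H|%:R by apply: le_lt_trans r1 hr.
  by rewrite ltr1n.
set Mr := ((m.+1 ^ m)%N%:R : R) `^ rho_star R H.
have M1 : 1 <= Mr.
  have a1 : (1 : R) <= (m.+1 ^ m)%N%:R by rewrite ler1n expn_gt0.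
  have := ler_powR a1 (le_trans ler01 r1); rewrite powRr0; exact.
exists ((2 * Mr) `^ (#|H|%:R - rho_star R H)^-1 *
        2 `^ ((#|H|%:R - 1) / (#|H|%:R - rho_star R H))).
move=> k k0 n G hG hex.
case: (posnP #|G|) => [l0|lpos].
  by rewrite l0; apply: mulr_ge0; [apply: mulr_ge0|]; apply: powR_ge0.
have [g gG] : exists g, g \in G by apply/set0Pn; rewrite -card_gt0.
have [c0 _] : exists c0, c0 \in g.
  apply/set0Pn; apply/negP => /eqP g0; move: hG; rewrite /hypergraph -g0 gG.
  by [].
pose z0 : {ffun 'I_m -> 'I_n} := [ffun=> c0].
have KK : (#|Kset H G z0|)%:R <= ((#|G| * m.+1 ^ m)%N%:R : R) `^ rho_star R H.
  apply: powR_limit; first by rewrite ler1n muln_gt0 lpos expn_gt0.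
  move=> eps eps0.
  have e2 : 0 < eps / 2 by rewrite divr_gt0.
  have [phi' [[fc1 fc2] sl]] := approx (eps / 2) e2.
  have sR : 0 < (#|H|%:R : R) by rewrite ltr0n.
  set d := eps / 2 / #|H|%:R.
  have d0 : 0 < d by rewrite divr_gt0.
  have hpos : forall e, e \in H -> 0 < phi' e + d.
    by move=> e eH; case/andP: (fc1 e eH) => p0 _; apply: ltr_wpDl.
  have hcov : forall v, v \in cover H -> 1 <= \sum_(e in H | v \in e) (phi' e + d).
    move=> v vc; apply: le_trans (fc2 v vc) _; apply: ler_sum => e _.
    by rewrite lerDl ltW.
  have := count_bound (R := R) (phi := fun e => phi' e + d) z0 lpos hpos hcov.
  move=> h; apply: (le_trans h); apply: ler_powR.
    by rewrite ler1n muln_gt0 lpos expn_gt0.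
  rewrite big_split /= sumr_const -mulr_natr /d divfK ?gt_eqF //.
  by apply: ltW; lra.
have KB : (#|Copies H G z0|)%:R <= (#|G|%:R) `^ rho_star R H * Mr.
  apply: (@le_trans _ _ (#|Kset H G z0|)%:R); first by rewrite ler_nat card_Copies.
  by apply: (le_trans KK); rewrite natrM powRM ?ler0n.
apply: (analysis_core (K := #|Copies H G z0|) s2 r1 hr M1 lpos k0 KB).
move=> t tl.
have [F [FG Fno [c [h1 h2]]]] :=
  deletion set0 (ltnW s2) (Copies_prop (H := H) (G := G) (z0 := z0)) tl.
exists c; split => //.
have Fex : (#|F| <= ex G H)%N.
  rewrite /ex; apply: (@leq_bigmax_cond _ _ (fun F : {set {set 'I_n}} => #|F|) F).
  rewrite FG /=; apply/negP => hc.
  have [S SC SF] := copy_in z0 FG hc.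
  by move: (Fno S SC); rewrite SF.
lia.
Qed.
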